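(* Let $\mathcal{H}$ be a complex Hilbert space, $A\in\mathcal{B}(\mathcal{H})$ positive and $S\in\mathcal{B}_A(\mathcal{H})$. Then for every positive integer $n$, $$d\omega_A^{4n}(S)\le 4^{n-1}\left\|\left(S^{\sharp_A}S\right)^n+\left(S^{\sharp_A}S\right)^{2n}\right\|_A\left\|\left(SS^{\sharp_A}\right)^n+\left(S^{\sharp_A}S\right)^{2n}\right\|_A .$$
   Context: $\mathcal{B}(\mathcal{H})$ denotes the bounded linear operators on $\mathcal{H}$. For positive $A$, $\langle x,z\rangle_A=\langle Ax,z\rangle$ and $\|z\|_A=\|A^{1/2}z\|$. $\mathcal{B}_A(\mathcal{H})$ is the set of $S\in\mathcal{B}(\mathcal{H})$ for which some $R\in\mathcal{B}(\mathcal{H})$ satisfies $AR=S^*A$; for such $S$, $S^{\sharp_A}=A^{\dagger}S^*A$ with $A^\dagger$ the Moore–Penrose inverse of $A$. For operators $T$ bounded with respect to $\|\cdot\|_A$: $\|T\|_A=\sup_{\|z\|_A=1}\|Tz\|_A$ and $d\omega_A(T)=\sup_{\|z\|_A=1}(|\langle Tz,z\rangle_A|^2+\|Tz\|_A^4)^{1/2}$. *)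

(* Defs.v *)
From HB Require Import structures.
From mathcomp Require Import all_boot all_order all_algebra.
From mathcomp Require Import complex.
From mathcomp Require Import boolp classical_sets reals.
Set Implicit Arguments. Unset Strict Implicit. Unset Printing Implicit Defensive.
Import Order.TTheory GRing.Theory Num.Theory.
Local Open Scope ring_scope.

Definition inner_product_axioms (R : realType) (H : lmodType R[i])
    (ip : H -> H -> R[i]) : Prop :=
  [/\ forall (a : R[i]) (x y z : H), ip (a *: x + y) z = a * ip x z + ip y z,
      forall x y : H, ip x y = conjc (ip y x),
      forall x : H, 0 <= ip x x
    & forall x : H, ip x x = 0 -> x = 0].

Definition hnorm (R : realType) (H : lmodType R[i]) (ip : H -> H -> R[i])
    (x : H) : R := Num.sqrt (complex.Re (ip x x)).

Definition hcomplete (R : realType) (H : lmodType R[i]) (ip : H -> H -> R[i])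
    : Prop :=
  forall u : nat -> H,
    (forall e : R, 0 < e -> exists N, forall m n, (N <= m)%N -> (N <= n)%N ->
        hnorm ip (u m - u n) < e) ->
    exists l : H, forall e : R, 0 < e -> exists N, forall n, (N <= n)%N ->
        hnorm ip (u n - l) < e.

Definition is_hilbert (R : realType) (H : lmodType R[i]) (ip : H -> H -> R[i])
    : Prop := inner_product_axioms ip /\ hcomplete ip.

Definition bounded_op (R : realType) (H : lmodType R[i]) (ip : H -> H -> R[i])
    (T : H -> H) : Prop :=
  (forall (a : R[i]) (x y : H), T (a *: x + y) = a *: T x + T y) /\
  exists M : R, forall x, hnorm ip (T x) <= M * hnorm ip x.

(* positive operator: <A x, x> >= 0 (in the partial order of R[i]) *)
Definition positive_op (R : realType) (H : lmodType R[i]) (ip : H -> H -> R[i])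
    (A : H -> H) : Prop :=
  bounded_op ip A /\ forall x, 0 <= ip (A x) x.

Definition is_adjoint (R : realType) (H : lmodType R[i]) (ip : H -> H -> R[i])
    (T Ts : H -> H) : Prop :=
  forall x y, ip (T x) y = ip x (Ts y).

Definition in_BA (R : realType) (H : lmodType R[i]) (ip : H -> H -> R[i])
    (A S Sstar : H -> H) : Prop :=
  bounded_op ip S /\ exists T, bounded_op ip T /\ forall x, A (T x) = Sstar (A x).

(* Moore-Penrose inverse on the range of A: for b in R(A), A^dagger b is the
   unique y in N(A)^perp with A y = b.  mp_graph A b y  <->  A^dagger b = y. *)
Definition mp_graph (R : realType) (H : lmodType R[i]) (ip : H -> H -> R[i])
    (A : H -> H) (b y : H) : Prop :=
  (exists u, A u = b) /\ A y = b /\ (forall z, A z = 0 -> ip y z = 0).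

Definition is_Asharp (R : realType) (H : lmodType R[i]) (ip : H -> H -> R[i])
    (A Sstar Ssharp : H -> H) : Prop :=
  forall x, mp_graph ip A (Sstar (A x)) (Ssharp x).

(* A-seminorm ||z||_A = ||A^{1/2} z|| = sqrt <A z, z> *)
Definition normA (R : realType) (H : lmodType R[i]) (ip : H -> H -> R[i])
    (A : H -> H) (z : H) : R := Num.sqrt (complex.Re (ip (A z) z)).

Definition opnormA (R : realType) (H : lmodType R[i]) (ip : H -> H -> R[i])
    (A T : H -> H) : R :=
  sup [set r : R | exists z, normA ip A z = 1 /\ r = normA ip A (T z)].

Definition domegaA (R : realType) (H : lmodType R[i]) (ip : H -> H -> R[i])
    (A T : H -> H) : R :=
  sup [set r : R | exists z, normA ip A z = 1 /\
        r = Num.sqrt (Normc.normc (ip (A (T z)) z) ^+ 2 + normA ip A (T z) ^+ 4)].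

Definition opadd (R : realType) (H : lmodType R[i]) (T U : H -> H) : H -> H :=
  fun x => T x + U x.
Definition opexp (R : realType) (H : lmodType R[i]) (T : H -> H) (n : nat)
    : H -> H := iter n T.

(* Main.v *)
Require Import Defs.
From HB Require Import structures.
From mathcomp Require Import all_boot all_order all_algebra.
From mathcomp Require Import complex.
From mathcomp Require Import boolp classical_sets reals.
From mathcomp Require Import ring lra zify.
Set Implicit Arguments. Unset Strict Implicit. Unset Printing Implicit Defensive.
Import Order.TTheory GRing.Theory Num.Theory.
Local Open Scope ring_scope.
Local Notation Re := complex.Re.
Local Notation Im := complex.Im.

Lemma ReD (R : realType) (x y : R[i]) : Re (x + y) = Re x + Re y.
Proof. by case: x => a b; case: y => c d. Qed.
Lemma ImD (R : realType) (x y : R[i]) : Im (x + y) = Im x + Im y.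
Proof. by case: x => a b; case: y => c d. Qed.
Lemma ReM (R : realType) (x y : R[i]) : Re (x * y) = Re x * Re y - Im x * Im y.
Proof. by case: x => a b; case: y => c d. Qed.
Lemma ImM (R : realType) (x y : R[i]) : Im (x * y) = Re x * Im y + Im x * Re y.
Proof. by case: x => a b; case: y => c d /=; rewrite addrC. Qed.
Lemma ReJ (R : realType) (x : R[i]) : Re (conjc x) = Re x.
Proof. by case: x. Qed.
Lemma ImJ (R : realType) (x : R[i]) : Im (conjc x) = - Im x.
Proof. by case: x. Qed.
Lemma cext (R : realType) (x y : R[i]) : Re x = Re y -> Im x = Im y -> x = y.
Proof. by case: x => a b; case: y => c d /= -> ->. Qed.
Lemma ReC (R : realType) (k : R) : Re (k%:C)%C = k. Proof. by []. Qed.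
Lemma ImC (R : realType) (k : R) : Im (k%:C)%C = 0. Proof. by []. Qed.

Ltac csimp := rewrite ?(ReD, ImD, ReM, ImM, ReJ, ImJ, ReC, ImC) /=.
Ltac csimp0 := rewrite ?(ReD, ImD, ReM, ImM, ReJ, ImJ, ReC, ImC).

Definition sesq (R : realType) (H : lmodType R[i]) (g : H -> H -> R[i]) :=
  (forall a x y z, g (a *: x + y) z = a * g x z + g y z) /\
  (forall a x y z, g x (a *: y + z) = conjc a * g x y + g x z).

Lemma g0l (R : realType) (H : lmodType R[i]) (g : H -> H -> R[i]) :
  sesq g -> forall z, g 0 z = 0.
Proof.
move=> [h1 _] z; have := h1 1 0 0 z; rewrite scale1r addr0 mul1r => h.
by apply: (addrI (g 0 z)); rewrite addr0 -h.
Qed.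
Lemma g0r (R : realType) (H : lmodType R[i]) (g : H -> H -> R[i]) :
  sesq g -> forall z, g z 0 = 0.
Proof.
move=> [_ h1] z; have := h1 1 z 0 0; rewrite scale1r addr0 rmorph1 mul1r => h.
by apply: (addrI (g z 0)); rewrite addr0 -h.
Qed.
Lemma gDl (R : realType) (H : lmodType R[i]) (g : H -> H -> R[i]) :
  sesq g -> forall x y z, g (x + y) z = g x z + g y z.
Proof. by move=> hg x y z; rewrite -{1}[x]scale1r hg.1 mul1r. Qed.
Lemma gZl (R : realType) (H : lmodType R[i]) (g : H -> H -> R[i]) :
  sesq g -> forall a x z, g (a *: x) z = a * g x z.
Proof. by move=> hg a x z; rewrite -[a *: x]addr0 hg.1 g0l // addr0. Qed.
Lemma gDr (R : realType) (H : lmodType R[i]) (g : H -> H -> R[i]) :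
  sesq g -> forall x y z, g z (x + y) = g z x + g z y.
Proof. by move=> hg x y z; rewrite -{1}[x]scale1r hg.2 rmorph1 mul1r. Qed.
Lemma gZr (R : realType) (H : lmodType R[i]) (g : H -> H -> R[i]) :
  sesq g -> forall a x z, g z (a *: x) = conjc a * g z x.
Proof. by move=> hg a x z; rewrite -[a *: x]addr0 hg.2 g0r // addr0. Qed.

Lemma gexp (R : realType) (H : lmodType R[i]) (g : H -> H -> R[i]) :
  sesq g -> forall c x y, g (x + c *: y) (x + c *: y) =
   g x x + conjc c * g x y + c * g y x + c * conjc c * g y y.
Proof.
move=> hg c x y; rewrite !(gDl hg, gDr hg, gZl hg, gZr hg).
ring.
Qed.

Lemma polar (R : realType) (H : lmodType R[i]) (g : H -> H -> R[i]) :
  sesq g -> (forall w, Im (g w w) = 0) -> forall x y, g y x = conjc (g x y).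
Proof.
move=> hg him x y.
have h1 := him (x + 1 *: y); rewrite gexp // in h1.
have h2 := him (x + 'i%C *: y); rewrite gexp // in h2.
move: h1 h2; rewrite rmorph1 !mul1r; csimp; rewrite !him.
move=> h1 h2; apply: cext; csimp; rewrite ?(mul0r, mulr0, add0r, addr0, mul1r, mulN1r, subr0) in h1 h2 *; lra.
Qed.

Definition herm (R : realType) (H : lmodType R[i]) (g : H -> H -> R[i]) :=
  forall x y, g x y = conjc (g y x).
Definition psd (R : realType) (H : lmodType R[i]) (g : H -> H -> R[i]) :=
  forall x, 0 <= g x x.
Definition qf (R : realType) (H : lmodType R[i]) (g : H -> H -> R[i]) x :=
  Re (g x x).

Lemma quad (R : realType) (a b c : R) : 0 <= c ->
  (forall t, 0 <= a + 2 * t * b + t ^+ 2 * c) -> b ^+ 2 <= a * c.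
Proof.
move=> hc H; have ha := H 0; rewrite !(mul0r, mulr0, expr0n) /= addr0 addr0 in ha.
have [c0|cpos] := eqVneq c 0.
  subst c; rewrite mulr0; have [b0|bn0] := eqVneq b 0.
    by rewrite b0 expr0n.
  have := H (- (a + 1) / (2 * b)).
  have -> : 2 * (- (a + 1) / (2 * b)) * b = - (a + 1) by field; rewrite bn0.
  rewrite mulr0; lra.
have cp : 0 < c by rewrite lt_def cpos hc.
have := H (- b / c).
have -> : a + 2 * (- b / c) * b + (- b / c) ^+ 2 * c = (a * c - b ^+ 2) / c.
  by field.
rewrite pmulr_lge0 ?invr_gt0 //; lra.
Qed.

Lemma q_facts (R : realType) (H : lmodType R[i]) (g : H -> H -> R[i]) :
  psd g -> forall x, Im (g x x) = 0 /\ 0 <= qf g x.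
Proof. by move=> hp x; have := hp x; rewrite lecE /= => /andP[/eqP <- ]. Qed.

Lemma gxxE (R : realType) (H : lmodType R[i]) (g : H -> H -> R[i]) :
  psd g -> forall x, g x x = (qf g x)%:C%C.
Proof. by move=> hp x; apply: cext => //=; rewrite (q_facts hp x).1. Qed.

Lemma Re_sym (R : realType) (H : lmodType R[i]) (g : H -> H -> R[i]) :
  herm g -> forall x y, Re (g y x) = Re (g x y).
Proof. by move=> hh x y; rewrite hh ReJ. Qed.

Lemma qlin (R : realType) (H : lmodType R[i]) (g : H -> H -> R[i]) :
  sesq g -> herm g -> forall x y (t : R),
  qf g (x + (t%:C)%C *: y) = qf g x + 2 * t * Re (g x y) + t ^+ 2 * qf g y.
Proof.
move=> hg hh x y t; rewrite /qf gexp //; csimp; rewrite (Re_sym hh x y).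
rewrite ?(mul0r, mulr0, add0r, addr0, mul1r, mulN1r, subr0, oppr0); lra.
Qed.

Lemma CSre (R : realType) (H : lmodType R[i]) (g : H -> H -> R[i]) :
  sesq g -> herm g -> psd g -> forall x y,
  Re (g x y) ^+ 2 <= qf g x * qf g y.
Proof.
move=> hg hh hp x y; apply: quad; first exact: (q_facts hp y).2.
by move=> t; rewrite -qlin //; exact: (q_facts hp _).2.
Qed.

Lemma CS (R : realType) (H : lmodType R[i]) (g : H -> H -> R[i]) :
  sesq g -> herm g -> psd g -> forall x y,
  Re (g x y) ^+ 2 + Im (g x y) ^+ 2 <= qf g x * qf g y.
Proof.
move=> hg hh hp x y.
have := CSre hg hh hp x (g x y *: y).
rewrite gZr // /qf gZl // gZr // (gxxE hp y); csimp.
rewrite ?(mul0r, mulr0, add0r, addr0, subr0, opprK).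
set m := Re (g x y) ^+ 2 + Im (g x y) ^+ 2.
have hm : 0 <= m by rewrite /m addr_ge0 // sqr_ge0.
have hqx := (q_facts hp x).2; have hqy := (q_facts hp y).2.
rewrite /qf in hqx hqy.
move=> h.
have h' : m * m <= m * (Re (g x x) * Re (g y y)).
  rewrite /m; move: h; rewrite !expr2; nra.
have [m0|mpos] := eqVneq m 0; first by rewrite m0 mulr_ge0.
have mp : 0 < m by rewrite lt_def mpos hm.
by rewrite -(ler_pM2l mp).
Qed.

Lemma Re_le (R : realType) (H : lmodType R[i]) (g : H -> H -> R[i]) :
  sesq g -> herm g -> psd g -> forall x y,
  Re (g x y) <= Num.sqrt (qf g x) * Num.sqrt (qf g y).
Proof.
move=> hg hh hp x y; have h := CSre hg hh hp x y.
have hqx := (q_facts hp x).2; have hqy := (q_facts hp y).2.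
have e : (Num.sqrt (qf g x) * Num.sqrt (qf g y)) ^+ 2 = qf g x * qf g y.
  by rewrite exprMn !sqr_sqrtr.
have s0 : 0 <= Num.sqrt (qf g x) * Num.sqrt (qf g y) by rewrite mulr_ge0 ?sqrtr_ge0.
move: h; rewrite -e => h; nra.
Qed.

Lemma qD (R : realType) (H : lmodType R[i]) (g : H -> H -> R[i]) :
  sesq g -> herm g -> psd g -> forall x y,
  qf g (x + y) <= 2 * (qf g x + qf g y).
Proof.
move=> hg hh hp x y; have := qlin hg hh x y 1; rewrite scale1r => ->.
have h := CSre hg hh hp x y.
have hqx := (q_facts hp x).2; have hqy := (q_facts hp y).2.
rewrite expr1n mul1r mulr1.
have h2 : (2 * Re (g x y) - (qf g x + qf g y)) * (2 * Re (g x y) + (qf g x + qf g y)) <= 0.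
  have : 0 <= (qf g x - qf g y) ^+ 2 by apply: sqr_ge0.
  move: h; rewrite !expr2 => h h'; nra.
nra.
Qed.

Lemma gBl (R : realType) (H : lmodType R[i]) (g : H -> H -> R[i]) :
  sesq g -> forall x y z, g (x - y) z = g x z - g y z.
Proof. by move=> hg x y z; rewrite gDl // -scaleN1r gZl // mulN1r. Qed.
Lemma gBr (R : realType) (H : lmodType R[i]) (g : H -> H -> R[i]) :
  sesq g -> forall x y z, g z (x - y) = g z x - g z y.
Proof. by move=> hg x y z; rewrite gDr // -scaleN1r gZr // rmorphN1 mulN1r. Qed.

Definition linop (R : realType) (H : lmodType R[i]) (U : H -> H) :=
  forall a x y, U (a *: x + y) = a *: U x + U y.

Lemma linopD (R : realType) (H : lmodType R[i]) (U : H -> H) :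
  linop U -> forall x y, U (x + y) = U x + U y.
Proof. by move=> hU x y; rewrite -{1}[x]scale1r hU scale1r. Qed.

Lemma linop_iter (R : realType) (H : lmodType R[i]) (U : H -> H) :
  linop U -> forall n, linop (iter n U).
Proof. by move=> hU; elim=> [//|n IH] a x y /=; rewrite IH hU. Qed.

Lemma linop_comp (R : realType) (H : lmodType R[i]) (U V : H -> H) :
  linop U -> linop V -> linop (U \o V).
Proof. by move=> hU hV a x y /=; rewrite hV hU. Qed.

Lemma gexp2 (R : realType) (H : lmodType R[i]) (g : H -> H -> R[i]) :
  sesq g -> forall c u v x y, g (u + c *: v) (x + c *: y) =
   g u x + conjc c * g u y + c * g v x + c * conjc c * g v y.
Proof.
move=> hg c u v x y; rewrite !(gDl hg, gDr hg, gZl hg, gZr hg).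
ring.
Qed.

Lemma iter_move (R : realType) (H : lmodType R[i]) (g : H -> H -> R[i])
  (U : H -> H) : (forall x y, g (U x) y = g x (U y)) ->
  forall x b a, g (iter a U x) (iter b U x) = g (iter (a + b) U x) x.
Proof.
move=> hs x; elim=> [|b IH] a; first by rewrite addn0.
by rewrite iterS -hs -iterS IH addSnnS.
Qed.

Lemma HM_quad (R : realType) (H : lmodType R[i]) (g : H -> H -> R[i])
  (U : H -> H) : sesq g -> psd g -> linop U ->
  (forall x y, g (U x) y = g x (U y)) -> (forall x, 0 <= Re (g (U x) x)) ->
  forall x j (t : R), 0 <= Re (g (iter j U x) x) + 2 * t * Re (g (iter j.+1 U x) x)
     + t ^+ 2 * Re (g (iter j.+2 U x) x).
Proof.
move=> hg hp hU hs hpos x j t.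
set r : nat := odd j; set k := j./2.
have ej : (r + k.*2 = j)%N by rewrite /r /k -[in RHS](odd_double_half j).
set a := iter k U x; set b := iter k.+1 U x.
have hV : 0 <= Re (g (iter r U (a + t%:C%C *: b)) (a + t%:C%C *: b)).
  rewrite /r; case: (odd j) => /=; first exact: hpos.
  exact: (q_facts hp _).2.
have cE : forall p q m, (p + q = m)%N ->
   Re (g (iter p U x) (iter q U x)) = Re (g (iter m U x) x).
  by move=> p q m <-; rewrite iter_move.
rewrite addrC linop_iter // /a /b -!iterD in hV.
rewrite !(addrC (t%:C%C *: _)) gexp2 // in hV.
move: hV; csimp0.
rewrite (cE (r + k) k j) ?(cE (r + k) k.+1 j.+1) ?(cE (r + k.+1) k j.+1)
  ?(cE (r + k.+1) k.+1 j.+2); try (rewrite -ej -!addnn; lia).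
rewrite ?(mul0r, mulr0, add0r, addr0, subr0, opprK, oppr0) => h; lra.
Qed.

Lemma HM (R : realType) (H : lmodType R[i]) (g : H -> H -> R[i])
  (U : H -> H) : sesq g -> psd g -> linop U ->
  (forall x y, g (U x) y = g x (U y)) -> (forall x, 0 <= Re (g (U x) x)) ->
  forall x j, Re (g (U x) x) ^+ j.+1 <=
     Re (g x x) ^+ j * Re (g (iter j.+1 U x) x).
Proof.
move=> hg hp hU hs hpos x.
pose c m := Re (g (iter m U x) x).
have c0 : Re (g x x) = c 0%N by [].
have c1 : Re (g (U x) x) = c 1%N by [].
have cge0 : forall m, 0 <= c m.
  move=> m; have := HM_quad hg hp hU hs hpos x m 0.
  by rewrite !(mul0r, mulr0, expr0n) /= !addr0.
have lc : forall m, c m.+1 ^+ 2 <= c m * c m.+2.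
  move=> m; apply: quad; first exact: cge0.
  exact: HM_quad.
have st : forall j, c 1%N * c j <= c 0%N * c j.+1.
  elim=> [|j IH]; first by rewrite mulrC.
  have L := lc j; have h0 := cge0 0%N; have h1 := cge0 1%N.
  have hj := cge0 j; have hj1 := cge0 j.+1; have hj2 := cge0 j.+2.
  have [cj0|cjn] := eqVneq (c j) 0.
    rewrite cj0 mul0r in L.
    have -> : c j.+1 = 0 by move: L; rewrite expr2; nra.
    by rewrite mulr0 mulr_ge0.
  have cjp : 0 < c j by rewrite lt_def cjn hj.
  have h : c j * (c 1%N * c j.+1) <= c j * (c 0%N * c j.+2).
    have e1 : c j * (c 1%N * c j.+1) = (c 1%N * c j) * c j.+1 by ring.
    rewrite e1; apply: (le_trans (ler_wpM2r hj1 IH)).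
    rewrite -mulrA -expr2; apply: (le_trans (ler_wpM2l h0 L)).
    by rewrite mulrCA.
  by rewrite -(ler_pM2l cjp).
move=> j; rewrite c0 c1; elim: j => [|j IH]; first by rewrite expr1 expr0 mul1r.
rewrite exprS (le_trans (ler_wpM2l (cge0 1%N) IH)) //.
have e : c 0%N ^+ j.+1 * c j.+2 = c 0%N ^+ j * (c 0%N * c j.+2) by rewrite exprS; ring.
rewrite mulrCA e; apply: ler_wpM2l; first exact: exprn_ge0.
exact: st.
Qed.

Lemma bernoulli (R : realType) (r : R) : 1 <= r -> forall n : nat,
  1 + n%:R * (r - 1) <= r ^+ n.
Proof.
move=> hr; elim=> [|n IH]; first by rewrite mul0r addr0 expr0.
rewrite exprS -natr1.
have h0 : 0 <= n%:R :> R by apply: ler0n.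
have : r * (1 + n%:R * (r - 1)) <= r * r ^+ n by apply: ler_wpM2l => //; lra.
have : 0 <= n%:R * ((r - 1) * (r - 1)) by apply: mulr_ge0 => //; nra.
nra.
Qed.

Lemma grow (R : realType) (a b C : R) : 0 <= a -> 0 < b ->
  (forall j : nat, a ^+ j.+1 <= b ^+ j.+1 * C) -> a <= b.
Proof.
move=> ha hb H; rewrite leNgt; apply/negP => hab.
set r := a / b.
have hr : 1 < r by rewrite /r ltr_pdivlMr // mul1r.
have aE : a = r * b by rewrite /r divfK // gt_eqF.
have hC : forall j : nat, r ^+ j.+1 <= C.
  move=> j; have := H j; rewrite aE exprMn mulrC.
  by rewrite ler_pM2l // exprn_gt0.
have C0 : 0 <= C by have := hC 0%N; rewrite expr1; lra.
have hr1 : 0 < r - 1 by lra.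
set n := Num.bound (C / (r - 1)).
have hn := archi_boundP (divr_ge0 C0 (ltW hr1)).
have hn' : C < n%:R * (r - 1) by rewrite -ltr_pdivrMr.
have := bernoulli (ltW hr) n.+1; have := hC n.
have : n%:R * (r - 1) <= n.+1%:R * (r - 1).
  by apply: ler_wpM2r; [lra | rewrite ler_nat].
lra.
Qed.

Lemma sqrt1E (R : realType) (x : R) : 0 <= x -> Num.sqrt x = 1 -> x = 1.
Proof. by move=> h e; rewrite -(sqr_sqrtr h) e expr1n. Qed.

Lemma sup_ge0 (R : realType) (E : set R) : (forall r, E r -> 0 <= r) -> 0 <= sup E.
Proof.
move=> h; case: (pselect (has_sup E)) => hs; last by rewrite sup_out.
case: (hs) => [[r Er] _]; apply: (le_trans (h r Er)).
exact: sup_upper_bound.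
Qed.

Lemma sup_le_bound (R : realType) (E : set R) (B r : R) :
  (forall x, E x -> x <= B) -> E r -> r <= sup E.
Proof.
move=> hB Er; apply: sup_upper_bound => //; split; first by exists r.
by exists B.
Qed.

Lemma root_ex (R : realType) (N : nat) (K : R) : (0 < N)%N -> 0 <= K ->
  exists u, 0 <= u /\ u ^+ N = K.
Proof.
move=> hN hK.
have := @poly_ivt R ('X^N - K%:P) 0 (K + 1).
rewrite !hornerE expr0n.
have -> : (N == 0%N) = false by case: N hN.
move=> h; case: h.
- lra.
- rewrite sub0r oppr_le0 hK /= subr_ge0.
  apply: (@le_trans _ _ (K + 1)); first lra.
  have h1 : 1 <= K + 1 by lra.
  exact: ler_eXnr.
move=> u /andP[u0 _]; rewrite rootE !hornerE subr_eq0 => /eqP e.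
by exists u.
Qed.

Lemma sup_pow_le (R : realType) (E : set R) (N : nat) (K : R) : (0 < N)%N ->
  0 <= K -> (forall r, E r -> 0 <= r /\ r ^+ N <= K) -> sup E ^+ N <= K.
Proof.
move=> hN hK hE; have [u [u0 uK]] := root_ex hN hK.
have ub : forall r, E r -> r <= u.
  move=> r Er; have [r0 rK] := hE r Er.
  by rewrite -(ler_pXn2r hN) // ?uK.
case: (pselect (exists r, E r)) => [[r Er]|ne].
2: rewrite sup_out; first by rewrite expr0n; move: hN; rewrite lt0n => /negPf ->.
2: by case=> [[r Er] _]; apply: ne; exists r.
have hs : 0 <= sup E by apply: sup_ge0 => r0 /hE [].
rewrite -uK; apply: lerXn2r => //; apply: ge_sup; first by exists r.
exact: ub.
Qed.

Lemma ip_sesq (R : realType) (H : lmodType R[i]) (ip : H -> H -> R[i]) :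
  inner_product_axioms ip -> sesq ip.
Proof.
case=> h1 h2 _ _; split => // a x y z.
by rewrite [LHS]h2 h1 rmorphD rmorphM [ip x y]h2 [ip x z]h2.
Qed.
Lemma ip_herm (R : realType) (H : lmodType R[i]) (ip : H -> H -> R[i]) :
  inner_product_axioms ip -> herm ip.
Proof. by case. Qed.
Lemma ip_psd (R : realType) (H : lmodType R[i]) (ip : H -> H -> R[i]) :
  inner_product_axioms ip -> psd ip.
Proof. by case. Qed.

Definition gA (R : realType) (H : lmodType R[i]) (ip : H -> H -> R[i])
  (A : H -> H) := fun x y => ip (A x) y.

Lemma gA_sesq (R : realType) (H : lmodType R[i]) (ip : H -> H -> R[i]) A :
  inner_product_axioms ip -> linop A -> sesq (gA ip A).
Proof.
move=> hi hA; have hs := ip_sesq hi; split=> a x y z; rewrite /gA.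
  by rewrite hA hs.1.
by rewrite hs.2.
Qed.

Lemma gA_psd (R : realType) (H : lmodType R[i]) (ip : H -> H -> R[i]) A :
  (forall x, 0 <= ip (A x) x) -> psd (gA ip A).
Proof. by []. Qed.

Lemma gA_herm (R : realType) (H : lmodType R[i]) (ip : H -> H -> R[i]) A :
  inner_product_axioms ip -> linop A -> (forall x, 0 <= ip (A x) x) ->
  herm (gA ip A).
Proof.
move=> hi hA hp x y; apply: polar; first exact: gA_sesq.
by move=> w; exact: (q_facts (gA_psd hp) w).1.
Qed.

Lemma bnd_sq (R : realType) (H : lmodType R[i]) (ip : H -> H -> R[i]) T :
  inner_product_axioms ip -> bounded_op ip T ->
  exists M, 1 <= M /\ forall x, qf ip (T x) <= M * qf ip x.
Proof.
move=> hi [_ [M0 hM]]; exists ((`|M0| + 1) ^+ 2); split.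
  have := normr_ge0 M0; rewrite expr2; nra.
move=> x; have := hM x; rewrite /hnorm.
have q1 := (q_facts (ip_psd hi) (T x)).2; have q2 := (q_facts (ip_psd hi) x).2.
rewrite /qf in q1 q2 *.
have s1 := sqr_sqrtr q1; have s2 := sqr_sqrtr q2.
have r1 := sqrtr_ge0 (Re (ip (T x) (T x))); have r2 := sqrtr_ge0 (Re (ip x x)).
have hM0 := ler_norm M0; have hn := normr_ge0 M0.
set u := Num.sqrt _ in s1 r1 *; set v := Num.sqrt _ in s2 r2 *.
move=> h; rewrite -s1 -s2.
have h' : u <= (`|M0| + 1) * v by nra.
have : u ^+ 2 <= ((`|M0| + 1) * v) ^+ 2 by rewrite lerXn2r // nnegrE; nra.
by rewrite exprMn.
Qed.

Definition setting (R : realType) (H : lmodType R[i]) (ip : H -> H -> R[i])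
    (A S Sstar Ssharp : H -> H) :=
  [/\ is_hilbert ip, positive_op ip A, is_adjoint ip S Sstar,
      in_BA ip A S Sstar & is_Asharp ip A Sstar Ssharp].

Lemma linopB (R : realType) (H : lmodType R[i]) (U : H -> H) :
  linop U -> forall x y, U (x - y) = U x - U y.
Proof. by move=> hU x y; rewrite -scaleN1r addrC hU addrC scaleN1r. Qed.

Lemma ip_ext (R : realType) (H : lmodType R[i]) (ip : H -> H -> R[i]) :
  inner_product_axioms ip -> forall w1 w2, (forall u, ip u w1 = ip u w2) -> w1 = w2.
Proof.
move=> hi w1 w2 h; apply/eqP; rewrite -subr_eq0; apply/eqP.
case: (hi) => _ _ _ hd; apply: hd.
rewrite gBr; last exact: ip_sesq. by rewrite (h (w1 - w2)) subrr.
Qed.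


Lemma st_basic (R : realType) (H : lmodType R[i]) (ip : H -> H -> R[i])
    (A S Sstar Ssharp : H -> H) : setting ip A S Sstar Ssharp ->
  [/\ inner_product_axioms ip, linop A, linop S,
      sesq (gA ip A) /\ herm (gA ip A) /\ psd (gA ip A)
    & forall u v, ip (A u) v = ip u (A v)].
Proof.
case=> [[hi _] [[hAl _] hAp] _ [[hSl _] _] _].
have hh := gA_herm hi hAl hAp.
split=> //; first by split; [exact: gA_sesq | split].
move=> u v; have := hh u v; rewrite /gA => ->.
by rewrite [RHS](ip_herm hi).
Qed.

Lemma st_lin (R : realType) (H : lmodType R[i]) (ip : H -> H -> R[i])
    (A S Sstar Ssharp : H -> H) : setting ip A S Sstar Ssharp ->
  linop Sstar /\ linop Ssharp.
Proof.
move=> hs; have [hi hAl hSl [hgs [hgh hgp]] hAsa] := st_basic hs.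
case: hs => _ _ hadj _ hsh.
have hss : linop Sstar.
  move=> a y z; apply: (ip_ext hi) => u.
  by rewrite -hadj (ip_sesq hi).2 !hadj -(ip_sesq hi).2.
split => // a x x'.
set y1 := Ssharp (a *: x + x'); set y2 := a *: Ssharp x + Ssharp x'.
have eA : A y1 = A y2.
  have [_ [-> _]] := hsh (a *: x + x').
  have [_ [e1 _]] := hsh x; have [_ [e2 _]] := hsh x'.
  by rewrite /y2 hAl hAl hss -e1 -e2.
have z1 : forall z, A z = 0 -> ip y1 z = 0.
  by have [_ [_ h]] := hsh (a *: x + x'); exact: h.
have z2 : forall z, A z = 0 -> ip y2 z = 0.
  move=> z hz; have [_ [_ h1]] := hsh x; have [_ [_ h2]] := hsh x'.
  by rewrite /y2 (ip_sesq hi).1 h1 // h2 // mulr0 addr0.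
have d0 : A (y1 - y2) = 0 by rewrite linopB // eA subrr.
apply/eqP; rewrite -subr_eq0; apply/eqP.
case: (hi) => _ _ _ hd; apply: hd.
by rewrite (gBl (ip_sesq hi)) (z1 _ d0) (z2 _ d0) subrr.
Qed.

Lemma st_ad (R : realType) (H : lmodType R[i]) (ip : H -> H -> R[i])
    (A S Sstar Ssharp : H -> H) : setting ip A S Sstar Ssharp ->
  (forall x y, gA ip A (S x) y = gA ip A x (Ssharp y)) /\
  (forall x y, gA ip A (Ssharp x) y = gA ip A x (S y)).
Proof.
move=> hs; have [hi hAl hSl [hgs [hgh hgp]] hAsa] := st_basic hs.
case: hs => _ _ hadj _ hsh.
have ad1 : forall x y, gA ip A (S x) y = gA ip A x (Ssharp y).
  move=> x y; rewrite /gA hAsa hadj.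
  have [_ [e _]] := hsh y.
  by rewrite -e -hAsa.
split=> // x y.
by rewrite hgh -ad1 -hgh.
Qed.

Lemma st_T (R : realType) (H : lmodType R[i]) (ip : H -> H -> R[i])
    (A S Sstar Ssharp : H -> H) : setting ip A S Sstar Ssharp ->
  exists T, bounded_op ip T /\
     forall x y, gA ip A (T (S x)) y = gA ip A (S x) (S y).
Proof.
move=> hs; have [hi hAl hSl [hgs [hgh hgp]] hAsa] := st_basic hs.
case: hs => _ _ hadj [_ [T [hT eT]]] _.
exists T; split => // x y; rewrite /gA eT.
by rewrite (ip_herm hi) -hadj -(ip_herm hi).
Qed.

Lemma iter_bound (R : realType) (H : lmodType R[i]) (g : H -> H -> R[i]) U D :
  (forall y, qf g (U y) <= D * qf g y) -> 0 <= D -> psd g ->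
  forall m y, qf g (iter m U y) <= D ^+ m * qf g y.
Proof.
move=> hU hD hp; elim=> [|m IH] y; first by rewrite expr0 mul1r.
rewrite iterS (le_trans (hU _)) // exprS -mulrA ler_wpM2l //.
Qed.

Lemma st_Abound (R : realType) (H : lmodType R[i]) (ip : H -> H -> R[i])
    (A S Sstar Ssharp : H -> H) : setting ip A S Sstar Ssharp ->
  exists MA, 1 <= MA /\ forall y, qf (gA ip A) y <= MA * qf ip y.
Proof.
move=> hs; have [hi hAl hSl [hgs [hgh hgp]] hAsa] := st_basic hs.
case: hs => _ [hAb _] _ _ _.
have [M [hM1 hM]] := bnd_sq hi hAb.
exists M; split => // y.
have h := CSre (ip_sesq hi) (ip_herm hi) (ip_psd hi) (A y) y.
have hq := (q_facts (ip_psd hi) y).2.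
have h2 : Re (ip (A y) y) ^+ 2 <= M * qf ip y * qf ip y.
  apply: (le_trans h); apply: ler_wpM2r => //.
change (Re (ip (A y) y) <= M * qf ip y).
set r := Re _ in h2 *; set q := qf ip y in hq h2 *.
have hMq : 0 <= M * q by apply: mulr_ge0 => //; lra.
have : (r - M * q) * (r + M * q) <= 0.
  have : 0 <= M * q * q * (M - 1).
    apply: mulr_ge0; last lra.
    by apply: mulr_ge0 => //; lra.
  move: h2; rewrite expr2; nra.
nra.
Qed.

Lemma st_SAbound (R : realType) (H : lmodType R[i]) (ip : H -> H -> R[i])
    (A S Sstar Ssharp : H -> H) : setting ip A S Sstar Ssharp ->
  exists L, 1 <= L /\ forall x, qf (gA ip A) (S x) <= L * qf (gA ip A) x.
Proof.
move=> hs; have [hi hAl hSl [hgs [hgh hgp]] hAsa] := st_basic hs.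
have [MA [hMA1 hMA]] := st_Abound hs.
have [T [hTb eT]] := st_T hs.
have hSb : bounded_op ip S by case: hs => _ _ _ [].
have [MT [hMT1 hMT]] := bnd_sq hi hTb.
have [MS [hMS1 hMS]] := bnd_sq hi hSb.
set KB := MT * MS.
have hKB : 1 <= KB by rewrite /KB; nra.
pose B := T \o S.
have hB : forall y, qf ip (B y) <= KB * qf ip y.
  move=> y; rewrite /B /= (le_trans (hMT _)) // /KB -mulrA ler_wpM2l //; lra.
have Bl : linop B by apply: linop_comp => //; case: hTb.
have Bsa : forall u v, gA ip A (B u) v = gA ip A u (B v).
  by move=> u v; rewrite /B /= eT hgh -eT -hgh.
have Bpos : forall u, 0 <= Re (gA ip A (B u) u).
  by move=> u; rewrite /B /= eT; exact: (q_facts hgp _).2.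
exists KB; split => // x.
set t := qf (gA ip A) x; set s := qf (gA ip A) (S x); set h := qf ip x.
have t0 : 0 <= t := (q_facts hgp x).2.
have s0 : 0 <= s := (q_facts hgp (S x)).2.
have h0 : 0 <= h := (q_facts (ip_psd hi) x).2.
have hm := HM hgs hgp Bl Bsa Bpos x.
have sE : Re (gA ip A (B x) x) = s by rewrite /B /= eT.
rewrite sE in hm.
have cb : forall j, Re (gA ip A (iter j.+1 B x) x) ^+ 2 <= MA * (KB ^+ j.+1 * h) * t.
  move=> j; apply: (le_trans (CSre hgs hgh hgp _ _)); rewrite -/t.
  apply: ler_wpM2r => //; apply: (le_trans (hMA _)); apply: ler_wpM2l; first lra.
  apply: iter_bound => //; [lra | exact: ip_psd].
have key : forall j, (s ^+ j.+1) ^+ 2 <= (t ^+ j) ^+ 2 * (MA * (KB ^+ j.+1 * h) * t).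
  move=> j; have := hm j; rewrite -/(qf (gA ip A) x) -/t.
  set c := Re (gA ip A (iter _ B x) x) => hj.
  have hs' : 0 <= s ^+ j.+1 by exact: exprn_ge0.
  have : (s ^+ j.+1) ^+ 2 <= (t ^+ j * c) ^+ 2.
    move: hs' hj; set a1 := s ^+ j.+1; set b1 := t ^+ j * c => ha hb.
    by rewrite !expr2; nra.
  rewrite exprMn => h1; apply: (le_trans h1); apply: ler_wpM2l.
    exact: sqr_ge0.
  exact: cb.
have [tz|tn] := eqVneq t 0.
  have := key 0%N; rewrite tz !mulr0 => hh.
  have : s ^+ 2 <= 0 by rewrite -[s]expr1.
  by rewrite expr2 => ?; nra.
have tp : 0 < t by rewrite lt_def tn t0.
have ss : s ^+ 2 <= KB * t ^+ 2.
  apply: (@grow _ _ _ (MA * h / t)); [exact: sqr_ge0 | | ].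
    by apply: mulr_gt0; [lra | exact: exprn_gt0].
  move=> j; rewrite -exprM mulnC exprM.
  apply: (le_trans (key j)).
  have E : (KB * t ^+ 2) ^+ j.+1 * (MA * h / t) =
      t ^+ j ^+ 2 * (MA * (KB ^+ j.+1 * h) * t).
    have e1 : (t ^+ 2) ^+ j.+1 = t ^+ 2 * (t ^+ j) ^+ 2.
      by rewrite -!exprM -exprD; congr (_ ^+ _); lia.
    rewrite exprMn e1.
    set tj := t ^+ j; set kj := KB ^+ j.+1.
    by field.
  by rewrite E.
have : s ^+ 2 <= (KB * t) ^+ 2.
  apply: (le_trans ss); rewrite exprMn ler_wpM2r ?sqr_ge0 //.
  by rewrite expr2; nra.
move=> h2; rewrite -(ler_pXn2r (isT : (0 < 2)%N)) //; rewrite nnegrE; nra.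
Qed.

Lemma st_bounds (R : realType) (H : lmodType R[i]) (ip : H -> H -> R[i])
    (A S Sstar Ssharp : H -> H) : setting ip A S Sstar Ssharp ->
  exists L, 1 <= L /\ (forall x, qf (gA ip A) (S x) <= L * qf (gA ip A) x) /\
      (forall x, qf (gA ip A) (Ssharp x) <= L * qf (gA ip A) x).
Proof.
move=> hs; have [hi hAl hSl [hgs [hgh hgp]] hAsa] := st_basic hs.
have [ad1 ad2] := st_ad hs.
have [L [hL hLS]] := st_SAbound hs.
exists L; split => //; split => // x.
set u := qf _ (Ssharp x); set t := qf _ x.
have u0 : 0 <= u := (q_facts hgp _).2.
have t0 : 0 <= t := (q_facts hgp _).2.
have h := CSre hgs hgh hgp x (S (Ssharp x)).
rewrite -ad2 -/u -/t in h.
have h2 : u ^+ 2 <= t * (L * u) by apply: (le_trans h); apply: ler_wpM2l.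
move: h2; rewrite expr2 => h2.
have hLt : 0 <= L * t by apply: mulr_ge0 => //; lra.
have [uz|un] := eqVneq u 0; first by rewrite uz.
have up : 0 < u by rewrite lt_def un u0.
have e : t * (L * u) = u * (L * t) by ring.
by rewrite -(ler_pM2l up) -e.
Qed.

Lemma normc_sq (R : realType) (w : R[i]) :
  Normc.normc w ^+ 2 = Re w ^+ 2 + Im w ^+ 2.
Proof. by case: w => a b /=; rewrite sqr_sqrtr // addr_ge0 // sqr_ge0. Qed.

Lemma opnorm_ge (R : realType) (H : lmodType R[i]) (ip : H -> H -> R[i])
    (A W : H -> H) (D : R) : sesq (gA ip A) -> herm (gA ip A) -> psd (gA ip A) ->
  0 <= D -> (forall y, qf (gA ip A) (W y) <= D * qf (gA ip A) y) ->
  forall z, normA ip A z = 1 -> Re (gA ip A (W z) z) <= opnormA ip A W.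
Proof.
move=> hgs hgh hgp hD hW z hz.
have qz : qf (gA ip A) z = 1 by apply: sqrt1E => //; exact: (q_facts hgp z).2.
apply: (le_trans (Re_le hgs hgh hgp _ _)); rewrite qz sqrtr1 mulr1.
apply: (@sup_le_bound _ _ (1 + D)); last by exists z.
move=> r [z' [hz' ->]].
have qz' : qf (gA ip A) z' = 1 by apply: sqrt1E => //; exact: (q_facts hgp z').2.
have := hW z'; rewrite qz' mulr1.
have q0 := (q_facts hgp (W z')).2.
rewrite /normA; change (Re (ip (A (W z')) (W z'))) with (qf (gA ip A) (W z')).
have := sqr_sqrtr q0; have := sqrtr_ge0 (qf (gA ip A) (W z')).
set v := Num.sqrt _ => v0 e h; rewrite -e in h; move: h; rewrite expr2 => h; nra.
Qed.

Lemma opnorm_ge0 (R : realType) (H : lmodType R[i]) (ip : H -> H -> R[i])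
    (A W : H -> H) : 0 <= opnormA ip A W.
Proof. by apply: sup_ge0 => r [z [_ ->]]; exact: sqrtr_ge0. Qed.

Lemma opadd_bound (R : realType) (H : lmodType R[i]) (g : H -> H -> R[i])
   (U V : H -> H) (D1 D2 : R) : sesq g -> herm g -> psd g -> 0 <= D1 -> 0 <= D2 ->
  (forall y, qf g (U y) <= D1 * qf g y) -> (forall y, qf g (V y) <= D2 * qf g y) ->
  forall y, qf g (opadd U V y) <= (2 * (D1 + D2)) * qf g y.
Proof.
move=> hgs hgh hgp h1 h2 hU hV y; rewrite /opadd.
apply: (le_trans (qD hgs hgh hgp _ _)).
have := hU y; have := hV y; have := (q_facts hgp y).2; nra.
Qed.

Lemma pow_conv (R : realType) (x y : R) n : 0 <= x -> 0 <= y ->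
  (x + y) ^+ n.+1 <= 2 ^+ n * (x ^+ n.+1 + y ^+ n.+1).
Proof.
move=> hx hy; elim: n => [|n IH]; first by rewrite expr0 mul1r !expr1.
rewrite [(x + y) ^+ _]exprS.
have h0 : 0 <= x + y by lra.
apply: (le_trans (ler_wpM2l h0 IH)).
set X := x ^+ n.+1; set Y := y ^+ n.+1.
have hm : 0 <= (x - y) * (X - Y).
  have [hxy|hyx] := leP x y.
    have : X <= Y by apply: lerXn2r.
    nra.
  have : Y <= X by apply: lerXn2r => //; lra.
  nra.
have e1 : x ^+ n.+2 = x * X by rewrite exprS.
have e2 : y ^+ n.+2 = y * Y by rewrite exprS.
rewrite e1 e2 exprS.
have p0 : 0 <= 2 ^+ n :> R by apply: exprn_ge0.
have : (x + y) * (X + Y) <= 2 * (x * X + y * Y) by nra.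
move=> h; have := ler_wpM2l p0 h.
have -> : (x + y) * (2 ^+ n * (X + Y)) = 2 ^+ n * ((x + y) * (X + Y)) by ring.
have -> : 2 * 2 ^+ n * (x * X + y * Y) = 2 ^+ n * (2 * (x * X + y * Y)) by ring.
by [].
Qed.

Lemma key_ineq (R : realType) (m a b : R) : 0 <= m -> 0 <= a -> 0 <= b ->
  m <= a -> m <= b -> (m + a ^+ 2) ^+ 2 <= (a + a ^+ 2) * (b + a ^+ 2).
Proof.
move=> m0 a0 b0 ma mb.
have h1 : m * m <= a * b by apply: ler_pM.
have a2 : 0 <= a ^+ 2 by apply: sqr_ge0.
have h2 : (2 * m) * a ^+ 2 <= (a + b) * a ^+ 2 by apply: ler_wpM2r => //; lra.
have -> : (m + a ^+ 2) ^+ 2 = m * m + (2 * m) * a ^+ 2 + a ^+ 2 * a ^+ 2 by ring.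
have -> : (a + a ^+ 2) * (b + a ^+ 2) = a * b + (a + b) * a ^+ 2 + a ^+ 2 * a ^+ 2 by ring.
lra.
Qed.

Theorem theorem2p25 (R : realType) (H : lmodType R[i]) (ip : H -> H -> R[i])
    (A S Sstar Ssharp : H -> H) :
  is_hilbert ip ->
  positive_op ip A ->
  is_adjoint ip S Sstar ->
  in_BA ip A S Sstar ->
  is_Asharp ip A Sstar Ssharp ->
  forall n : nat, (0 < n)%N ->
    domegaA ip A S ^+ (4 * n) <=
    4%:R ^+ (n - 1) *
      opnormA ip A (opadd (opexp (Ssharp \o S) n) (opexp (Ssharp \o S) (2 * n))) *
      opnormA ip A (opadd (opexp (S \o Ssharp) n) (opexp (Ssharp \o S) (2 * n))).
Proof.
move=> hH hA hadj hBA hsh [//|n] _.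
have hs : setting ip A S Sstar Ssharp by split.
have [hi hAl hSl [hgs [hgh hgp]] hAsa] := st_basic hs.
have [hSsl hShl] := st_lin hs.
have [ad1 ad2] := st_ad hs.
have [L [hL1 [hLS hLSh]]] := st_bounds hs.
set P := Ssharp \o S; set Q := S \o Ssharp.
have Pl : linop P := linop_comp hShl hSl.
have Ql : linop Q := linop_comp hSl hShl.
have Psa : forall u v, gA ip A (P u) v = gA ip A u (P v).
  by move=> u v; rewrite /P /= ad2 ad1.
have Qsa : forall u v, gA ip A (Q u) v = gA ip A u (Q v).
  by move=> u v; rewrite /Q /= ad1 ad2.
have Ppos : forall u, 0 <= Re (gA ip A (P u) u).
  by move=> u; rewrite /P /= ad2; exact: (q_facts hgp _).2.
have Qpos : forall u, 0 <= Re (gA ip A (Q u) u).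
  by move=> u; rewrite /Q /= ad1; exact: (q_facts hgp _).2.
set L2 := L ^+ 2.
have L20 : 0 <= L2 by rewrite /L2 sqr_ge0.
have PB : forall y, qf (gA ip A) (P y) <= L2 * qf (gA ip A) y.
  move=> y; rewrite /P /= (le_trans (hLSh _)) // /L2 expr2 -mulrA ler_wpM2l //.
  lra.
have QB : forall y, qf (gA ip A) (Q y) <= L2 * qf (gA ip A) y.
  move=> y; rewrite /Q /= (le_trans (hLS _)) // /L2 expr2 -mulrA ler_wpM2l //.
  lra.
set N1 := opnormA ip A _; set N2 := opnormA ip A _.
have N10 : 0 <= N1 := opnorm_ge0 _ _ _.
have N20 : 0 <= N2 := opnorm_ge0 _ _ _.
have XB := opadd_bound hgs hgh hgp (exprn_ge0 n.+1 L20) (exprn_ge0 (2 * n.+1) L20)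
   (iter_bound PB L20 hgp n.+1) (iter_bound PB L20 hgp (2 * n.+1)).
have YB := opadd_bound hgs hgh hgp (exprn_ge0 n.+1 L20) (exprn_ge0 (2 * n.+1) L20)
   (iter_bound QB L20 hgp n.+1) (iter_bound PB L20 hgp (2 * n.+1)).
have D0 : forall k1 k2, 0 <= 2 * (L2 ^+ k1 + L2 ^+ k2).
  by move=> k1 k2; apply: mulr_ge0 => //; apply: addr_ge0; apply: exprn_ge0.
have hN1 := opnorm_ge hgs hgh hgp (D0 _ _) XB.
have hN2 := opnorm_ge hgs hgh hgp (D0 _ _) YB.
apply: sup_pow_le.
- by rewrite muln_gt0.
- by apply: mulr_ge0 => //; apply: mulr_ge0 => //; apply: exprn_ge0.
move=> r [z [hz ->]]; split; first exact: sqrtr_ge0.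
have qz : qf (gA ip A) z = 1 by apply: sqrt1E => //; exact: (q_facts hgp z).2.
have X1 : Re (gA ip A (opadd (iter n.+1 P) (iter (2 * n.+1) P) z) z) <= N1 := hN1 z hz.
have Y1 : Re (gA ip A (opadd (iter n.+1 Q) (iter (2 * n.+1) P) z) z) <= N2 := hN2 z hz.
rewrite /opadd gDl // ReD in X1; rewrite /opadd gDl // ReD in Y1.
set a := qf (gA ip A) (S z); set b := qf (gA ip A) (Ssharp z).
have a0 : 0 <= a := (q_facts hgp _).2.
have b0 : 0 <= b := (q_facts hgp _).2.
set w := ip (A (S z)) z.
set m := Re w ^+ 2 + Im w ^+ 2.
have m0 : 0 <= m by rewrite /m addr_ge0 // sqr_ge0.
have hm1 : m <= a.
  have := CS hgs hgh hgp (S z) z; rewrite qz mulr1; exact.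
have hm2 : m <= b.
  have := CS hgs hgh hgp z (Ssharp z); rewrite qz mul1r -ad1; exact.
have nA : normA ip A (S z) = Num.sqrt a by [].
have r2 : Num.sqrt (Normc.normc w ^+ 2 + normA ip A (S z) ^+ 4) ^+ 2 = m + a ^+ 2.
  rewrite normc_sq nA -/m.
  have -> : Num.sqrt a ^+ 4 = a ^+ 2.
    by rewrite (_ : 4%N = (2 * 2)%N) // exprM sqr_sqrtr.
  by rewrite sqr_sqrtr // addr_ge0 // sqr_ge0.
set rr := Num.sqrt _ in r2 *.
have -> : rr ^+ (4 * n.+1) = ((rr ^+ 2) ^+ 2) ^+ n.+1 by rewrite -!exprM mulnA.
rewrite r2.
have hP := HM hgs hgp Pl Psa Ppos z.
have hQ := HM hgs hgp Ql Qsa Qpos z.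
have ePa : Re (gA ip A (P z) z) = a by rewrite /P /= ad2.
have eQb : Re (gA ip A (Q z) z) = b by rewrite /Q /= ad1.
have qz' : Re (gA ip A z z) = 1 := qz.
have h1 := hP n; rewrite ePa qz' expr1n mul1r in h1.
have h2 := hQ n; rewrite eQb qz' expr1n mul1r in h2.
have h3 := hP (n.+1 + n)%N; rewrite ePa qz' expr1n mul1r in h3.
have e3 : ((n.+1 + n).+1 = 2 * n.+1)%N by rewrite mul2n -addnn addnS.
rewrite e3 in h3.
have ea : (a ^+ 2) ^+ n.+1 = a ^+ (2 * n.+1) by rewrite exprM.
have c1 := pow_conv n a0 (sqr_ge0 a).
have c2 := pow_conv n b0 (sqr_ge0 a).
rewrite ea in c1 c2.
have hq := key_ineq m0 a0 b0 hm1 hm2.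
have p0 : 0 <= 2 ^+ n :> R by apply: exprn_ge0.
have pp : 0 <= (a + a ^+ 2) * (b + a ^+ 2).
  by apply: mulr_ge0; apply: addr_ge0 => //; apply: sqr_ge0.
have hh : ((m + a ^+ 2) ^+ 2) ^+ n.+1 <= ((a + a ^+ 2) * (b + a ^+ 2)) ^+ n.+1.
  by apply: lerXn2r; rewrite ?nnegrE ?sqr_ge0.
apply: (le_trans hh).
rewrite exprMn.
have e4 : (4%:R : R) ^+ (n.+1 - 1) = 2 ^+ n * 2 ^+ n.
  by rewrite subn1 /= -exprMn -natrM.
rewrite e4.
have -> : 2 ^+ n * 2 ^+ n * N1 * N2 = (2 ^+ n * N1) * (2 ^+ n * N2) by ring.
apply: ler_pM.
- by apply: exprn_ge0; apply: addr_ge0 => //; apply: sqr_ge0.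
- by apply: exprn_ge0; apply: addr_ge0 => //; apply: sqr_ge0.
- apply: (le_trans c1); apply: ler_wpM2l => //; lra.
- apply: (le_trans c2); apply: ler_wpM2l => //; lra.
Qed.
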